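(* Let $n>1$ be a natural number which is either multiplicatively $e$-perfect (i.e. $T_e(n)=n^2$) or multiplicatively $e$-superperfect (i.e. $T_e(T_e(n))=n^2$). Such an $n$ is a prime power; write $n=p^a$ with $p$ prime and $a\ge 1$. Then $n$ is $e$-harmonic of type $1$ if and only if $\frac{\sigma_e(n)}{p}$ divides $d_e(n)$.
   Context: For $n=p_1^{a_1}\cdots p_r^{a_r}>1$ (prime factorization), a divisor $d=p_1^{b_1}\cdots p_r^{b_r}$ of $n$ is an exponential divisor ($e$-divisor) if $b_i\mid a_i$ for all $i$ (in particular $b_i\ge 1$). $\sigma_e(n)$ is the sum of the $e$-divisors of $n$, $d_e(n)=d(a_1)\cdots d(a_r)$ is the number of $e$-divisors of $n$ (where $d(m)$ is the number of positive divisors of $m$), and $T_e(n)$ is the product of the $e$-divisors of $n$. An integer $n$ is called $e$-harmonic of type $1$ if $\sigma_e(n)\mid n\,d_e(n)$. It is known (Sándor) that $n>1$ is multiplicatively $e$-perfect iff $n=p^a$ with $p$ prime and $a$ an ordinary perfect number, and multiplicatively $e$-superperfect iff $n=p^a$ with $p$ prime and $\sigma(\sigma(a))=2a$. *)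

(* Defs.v *)
From mathcomp Require Import all_boot.
Set Implicit Arguments. Unset Strict Implicit. Unset Printing Implicit Defensive.

Definition is_ediv (n d : nat) : bool :=
  (d %| n) &&
  all (fun p => (0 < logn p d) && (logn p d %| logn p n)) (primes n).

Definition edivisors (n : nat) : seq nat := [seq d <- divisors n | is_ediv n d].

Definition sigma_e (n : nat) : nat := \sum_(d <- edivisors n) d.

Definition d_e (n : nat) : nat := \prod_(p <- primes n) size (divisors (logn p n)).

Definition T_e (n : nat) : nat := \prod_(d <- edivisors n) d.

Definition e_harmonic1 (n : nat) : bool := sigma_e n %| n * d_e n.

(* Main.v *)
Require Import Defs.
From mathcomp Require Import all_boot zify.

Lemma sigma_pp (p a : nat) : prime p -> 0 < a ->
  exists m, sigma_e (p ^ a) = p * (1 + p * m).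
Proof.
move=> pp a0.
have p0 : 0 < p := prime_gt0 pp.
have n0 : 0 < p ^ a by rewrite expn_gt0 p0.
have prs : primes (p ^ a) = [:: p] by rewrite primesX // primes_prime.
have ed : forall d, is_ediv (p ^ a) d -> exists2 m, 0 < m & d = p ^ m.
  move=> d /andP[/(dvdn_pfactor _ _ pp)[m _ ->]]; rewrite prs /= andbT.
  by rewrite pfactorK // => /andP[m0 _]; exists m.
have pin : p \in divisors (p ^ a).
  by rewrite -dvdn_divisors // -{1}(expn1 p) dvdn_exp2l.
have pe : is_ediv (p ^ a) p.
  by rewrite /is_ediv -{1}(expn1 p) dvdn_exp2l // prs /= logn_prime // eqxx dvd1n.
rewrite /sigma_e /edivisors (bigD1_seq p) /=; last 2 first.
- by rewrite mem_filter pe.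
- exact/filter_uniq/divisors_uniq.
have : p ^ 2 %| \sum_(i <- [seq x <- divisors (p ^ a) | is_ediv (p ^ a) x] | i != p) i.
  rewrite big_filter_cond.
  apply: dvdn_sum => d /andP[/ed [m m0 ->]] ne.
  rewrite dvdn_exp2l //; case: m m0 ne => [|[|m]] //.
  by rewrite expn1 eqxx.
case/dvdnP=> k ->; exists k.
rewrite (expnS p 1) expn1; nia.
Qed.

Theorem mainTheorem1 (n p a : nat) :
  1 < n ->
  (T_e n = n ^ 2 \/ T_e (T_e n) = n ^ 2) ->
  prime p -> 0 < a -> n = p ^ a ->
  (e_harmonic1 n <-> (sigma_e n %/ p %| d_e n)).
Proof.
move=> _ _ pp a0 ->.
have p0 : 0 < p := prime_gt0 pp.
have [m sm] := @sigma_pp p a pp a0.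
rewrite /e_harmonic1 sm mulKn //.
set k := 1 + p * m.
have ck : coprime k (p ^ a).
  by rewrite coprimeXr // coprime_sym /k /coprime addnC mulnC gcdnMDl gcdn1.
split.
  move=> h; rewrite -(Gauss_dvdr _ ck); exact: dvdn_trans (dvdn_mull _ (dvdnn _)) h.
move=> h; rewrite -(prednK a0) expnS -mulnA dvdn_pmul2l //.
by rewrite -expnS prednK //; apply: dvdn_mull.
Qed.
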